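(* Let $b,M\in\mathbb{N}$, let $f_i<f_{i+1}$ be consecutive Farey fractions of order $M$, and let $\varepsilon\in(f_i,f_{i+1})$ be irrational. If $\mathcal{L}_M(\varepsilon)$ contains both words of some $b$-amicable pair, then \[ b\le\min\{\lfloor Mf_i\rfloor+1,\ M-\lfloor Mf_i\rfloor\}. \]
   Context: For irrational $\varepsilon\in(0,1)$, let $T_\varepsilon:[0,1)\to[0,1)$, $T_\varepsilon(x)=x+1-\varepsilon$ on $[0,\varepsilon)$ and $x-\varepsilon$ on $[\varepsilon,1)$; the coding $u_{\varepsilon,x_0}\in\{0,1\}^{\mathbb{Z}}$ has $u_n=0$ if $T^n_\varepsilon(x_0)\in[0,\varepsilon)$ and $1$ otherwise. $\mathcal{L}_M(\varepsilon)$ is the set of length-$M$ factors of $u_{\varepsilon,x_0}$ (independent of $x_0$). Farey fractions of order $M$: reduced fractions in $[0,1]$ with denominator $\le M$, ordered $0=f_0<\dots<f_r=1$. 3iet words: for irrational $\varepsilon\in(0,1)$ and $\max\{\varepsilon,1-\varepsilon\}<\ell<1$, let $T_{\varepsilon,\ell}$ on $[0,\ell)$ be $x\mapsto x+1-\varepsilon$ on $I_A=[0,\ell-1+\varepsilon)$, $x\mapsto x+1-2\varepsilon$ on $I_B=[\ell-1+\varepsilon,\varepsilon)$, $x\mapsto x-\varepsilon$ on $I_C=[\varepsilon,\ell)$; the word $u_{\varepsilon,\ell,x_0}\in\{A,B,C\}^{\mathbb{Z}}$ has $u_n=X$ iff $T^n_{\varepsilon,\ell}(x_0)\in I_X$.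 A 3iet factor is a finite factor of some such word. Morphisms $\sigma_{01},\sigma_{10}:\{A,B,C\}^*\to\{0,1\}^*$: $\sigma_{01}(A)=0,\sigma_{01}(B)=01,\sigma_{01}(C)=1$ and $\sigma_{10}(A)=0,\sigma_{10}(B)=10,\sigma_{10}(C)=1$. Two words $w^{(1)},w^{(2)}\in\{0,1\}^*$ form a $b$-amicable pair if there is a 3iet factor $w$ with exactly $b$ letters $B$ such that $w^{(1)}=\sigma_{01}(w)$ and $w^{(2)}=\sigma_{10}(w)$; its length is the common length $|w|+b$ of $w^{(1)},w^{(2)}$. *)

(* Defs.v *)
From Stdlib Require Import Reals ZArith List.
Import ListNotations.
Open Scope R_scope.

Definition irrational (x : R) : Prop :=
  ~ exists p q : Z, q <> 0%Z /\ x = IZR p / IZR q.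

(* Binary letters: false = 0, true = 1. *)

Definition Trot (eps x : R) : R :=
  if Rlt_dec x eps then x + 1 - eps else x - eps.

Definition code_rot (eps x : R) : bool :=
  if Rlt_dec x eps then false else true.

Definition rot_orbit (eps : R) (y : Z -> R) : Prop :=
  (forall n : Z, 0 <= y n < 1) /\ (forall n : Z, y (n + 1)%Z = Trot eps (y n)).

(* L_M(eps): the length-M factors of the codings u_{eps,x0} (union over x0 in [0,1),
   which equals the set for any single x0) *)
Definition LM (M : nat) (eps : R) (w : list bool) : Prop :=
  length w = M /\
  exists y : Z -> R, rot_orbit eps y /\
  exists n : Z, w = map (fun k => code_rot eps (y (n + Z.of_nat k)%Z)) (seq 0 M).

Definition farey (M : nat) (x : R) : Prop :=
  exists p q : nat, (1 <= q <= M)%nat /\ (p <= q)%nat /\ x = INR p / INR q.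

Definition consecutive_farey (M : nat) (f1 f2 : R) : Prop :=
  farey M f1 /\ farey M f2 /\ f1 < f2 /\
  ~ exists x : R, farey M x /\ f1 < x < f2.

Inductive L3 : Set := LA | LB | LC.

Definition T3 (eps l x : R) : R :=
  if Rlt_dec x (l - 1 + eps) then x + 1 - eps
  else if Rlt_dec x eps then x + 1 - 2 * eps
  else x - eps.

Definition code3 (eps l x : R) : L3 :=
  if Rlt_dec x (l - 1 + eps) then LA
  else if Rlt_dec x eps then LB
  else LC.

Definition iet_orbit (eps l : R) (y : Z -> R) : Prop :=
  (forall n : Z, 0 <= y n < l) /\ (forall n : Z, y (n + 1)%Z = T3 eps l (y n)).

Definition iet3_factor (w : list L3) : Prop :=
  exists eps l : R, irrational eps /\ 0 < eps < 1 /\ Rmax eps (1 - eps) < l /\ l < 1 /\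
  exists y : Z -> R, iet_orbit eps l y /\
  exists n : Z, w = map (fun k => code3 eps l (y (n + Z.of_nat k)%Z)) (seq 0 (length w)).

Definition sigma01 (a : L3) : list bool :=
  match a with LA => [false] | LB => [false; true] | LC => [true] end.
Definition sigma10 (a : L3) : list bool :=
  match a with LA => [false] | LB => [true; false] | LC => [true] end.

Definition count_B (w : list L3) : nat :=
  length (filter (fun a => match a with LB => true | _ => false end) w).

Definition amicable (b : nat) (w1 w2 : list bool) : Prop :=
  exists w : list L3, iet3_factor w /\ count_B w = b /\
    w1 = flat_map sigma01 w /\ w2 = flat_map sigma10 w.

(* Main.v *)
Require Import Defs.
From Stdlib Require Import Reals ZArith List Lra Lia.
Import ListNotations.
Open Scope R_scope.

Definition zeros (l : list bool) : nat := length (filter negb l).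
Definition ones (l : list bool) : nat := length (filter (fun x => x) l).

Lemma len_zo l : length l = (zeros l + ones l)%nat.
Proof. unfold zeros, ones; induction l as [|[] l IH]; simpl; lia. Qed.

Lemma zeros_app a c : zeros (a ++ c) = (zeros a + zeros c)%nat.
Proof. unfold zeros; rewrite filter_app, length_app; reflexivity. Qed.
Lemma ones_app a c : ones (a ++ c) = (ones a + ones c)%nat.
Proof. unfold ones; rewrite filter_app, length_app; reflexivity. Qed.

Lemma cB_le w : (count_B w <= zeros (flat_map sigma01 w))%nat /\
                (count_B w <= ones (flat_map sigma01 w))%nat.
Proof.
  induction w as [|a w IH]; simpl. { unfold zeros, ones, count_B; simpl; lia. }
  rewrite zeros_app, ones_app. unfold count_B in *.
  destruct a; simpl; unfold zeros, ones in *; simpl; lia.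
Qed.

Lemma orbit_count eps y n : rot_orbit eps y -> forall K,
  y (n + Z.of_nat K)%Z = y n - INR K * eps +
     INR (zeros (map (fun k => code_rot eps (y (n + Z.of_nat k)%Z)) (seq 0 K))).
Proof.
  intros [Hb Hs] K. induction K as [|K IH].
  { simpl. rewrite Z.add_0_r. unfold zeros; simpl; lra. }
  rewrite seq_S, map_app, zeros_app. simpl map.
  replace (n + Z.of_nat (S K))%Z with ((n + Z.of_nat K) + 1)%Z by lia.
  rewrite Hs, S_INR, plus_INR.
  assert (E : zeros [code_rot eps (y (n + Z.of_nat K)%Z)] = if Rlt_dec (y (n + Z.of_nat K)%Z) eps then 1%nat else 0%nat)
    by (unfold zeros, code_rot; destruct (Rlt_dec (y (n + Z.of_nat K)%Z) eps); reflexivity).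
  rewrite E. unfold Trot.
  destruct (Rlt_dec (y (n + Z.of_nat K)%Z) eps); simpl INR; rewrite IH; lra.
Qed.

Lemma farey_b M x : farey M x -> (1 <= M)%nat /\ 0 <= x <= 1.
Proof.
  intros (p & q & Hq & Hpq & ->). split; [lia|].
  assert (0 < INR q) by (apply lt_0_INR; lia).
  assert (INR p <= INR q) by (apply le_INR; lia).
  assert (0 <= INR p) by apply pos_INR.
  split.
  - unfold Rdiv; apply Rmult_le_pos; [lra| left; apply Rinv_0_lt_compat; lra].
  - apply (Rmult_le_reg_r (INR q)); auto. unfold Rdiv.
    rewrite Rmult_assoc, Rinv_l by lra. lra.
Qed.

Theorem mainTheorem4 (b M : nat) (f1 f2 eps : R) :
  consecutive_farey M f1 f2 ->
  f1 < eps < f2 -> irrational eps ->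
  (exists w1 w2 : list bool, amicable b w1 w2 /\ LM M eps w1 /\ LM M eps w2) ->
  (Z.of_nat b <= Z.min (Int_part (INR M * f1) + 1)
                        (Z.of_nat M - Int_part (INR M * f1)))%Z.
Proof.
  intros (F1 & F2 & H12 & Hno) Heps _ (w1 & w2 & (w & _ & HB & E1 & _) & (Hl & y & Hy & n & Hw) & _).
  destruct (farey_b _ _ F1) as [HM [f1p f1l]].
  destruct (farey_b _ _ F2) as [_ [f2p f2l]].
  set (m := Int_part (INR M * f1)).
  destruct (base_Int_part (INR M * f1)) as [Hm1 Hm2]. fold m in Hm1, Hm2.
  assert (HMp : 1 <= INR M) by (apply (le_INR 1); lia).
  assert (m0 : (0 <= m)%Z).
  { assert (IZR (-1) < IZR m) by (assert (0 <= INR M * f1) by nra; lra).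
    apply lt_IZR in H. lia. }
  assert (mM : (m < Z.of_nat M)%Z).
  { apply lt_IZR. rewrite <- INR_IZR_INZ. nra. }
  assert (Hup : INR M * eps < IZR m + 1).
  { set (k := Z.to_nat (m + 1)).
    assert (Hk : INR k = IZR m + 1).
    { unfold k. rewrite INR_IZR_INZ, Z2Nat.id by lia. rewrite plus_IZR. reflexivity. }
    assert (kM : (k <= M)%nat) by (unfold k; lia).
    assert (Hf : farey M (INR k / INR M)).
    { exists k, M. split; [lia|]. split; [exact kM|reflexivity]. }
    assert (Hgt : f1 < INR k / INR M).
    { apply (Rmult_lt_reg_l (INR M)); [lra|]. unfold Rdiv.
      rewrite <- Rmult_assoc, (Rmult_comm (INR M) (INR k)), Rmult_assoc, Rinv_r by lra.
      lra. }
    destruct (Rlt_dec (INR k / INR M) f2) as [Hl2|Hl2].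
    { exfalso. apply Hno. exists (INR k / INR M). tauto. }
    assert (eps < INR k / INR M) by lra.
    assert (INR M * eps < INR M * (INR k / INR M)) by (apply Rmult_lt_compat_l; lra).
    unfold Rdiv in H0. rewrite (Rmult_comm (INR k)), <- Rmult_assoc, Rinv_r, Rmult_1_l in H0 by lra.
    lra. }
  assert (Hdn : IZR m < INR M * eps) by nra.
  pose proof (orbit_count eps y n Hy M) as Hc. rewrite <- Hw in Hc.
  destruct Hy as [Hb _].
  pose proof (Hb n). pose proof (Hb (n + Z.of_nat M)%Z).
  set (Z0 := zeros w1) in *.
  assert (A1 : (m <= Z.of_nat Z0)%Z).
  { assert (IZR (m - 1) < IZR (Z.of_nat Z0)) by (rewrite minus_IZR, <- INR_IZR_INZ; lra).
    apply lt_IZR in H1. lia. }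
  assert (A2 : (Z.of_nat Z0 <= m + 1)%Z).
  { assert (IZR (Z.of_nat Z0) < IZR (m + 2)) by (rewrite plus_IZR, <- INR_IZR_INZ; lra).
    apply lt_IZR in H1. lia. }
  destruct (cB_le w) as [C1 C2]. rewrite <- E1, HB in C1, C2.
  pose proof (len_zo w1). fold Z0 in H1. rewrite Hl in H1.
  lia.
Qed.
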